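(* Consider rational $c$ for which $f_c(x)=x^2+c$ has a rational $3$-cycle $\{x_1,x_2,x_3\}$ (elements written in lowest terms). (a) Some $x_i$ has numerator equal to one of $\pm11,\pm17,\pm25$ if and only if $c=-\tfrac{421}{144}$. (b) Some $x_i$ has numerator $\pm19$ if and only if $c\in\{-\tfrac{301}{144},\,-\tfrac{337\cdot673}{360^2}\}$. (c) Some $x_i$ has numerator $\pm23$ if and only if $c\in\{-\tfrac{301}{144},\,-\tfrac{43^2}{24^2}\}$.
   Context: A rational $3$-cycle of $f_c$ is the orbit of a rational point of minimal period $3$. Standing fact: $f_c$ has one iff $c=-A(m,n)/B(m,n)$ with $A(m,n)=m^6+2m^5n+4m^4n^2+8m^3n^3+9m^2n^4+4mn^5+n^6$, $B(m,n)=4m^2n^2(m+n)^2$, for coprime integers $m,n$ with $mn(m+n)\ne0$; the cycle is then $\{\frac{t_1}{2mn(m+n)},\frac{t_2}{2mn(m+n)},-\frac{t_3}{2mn(m+n)}\}$ in lowest terms, with $t_1=m^3+2m^2n+mn^2+n^3$, $t_2=m^3-mn^2-n^3$, $t_3=m^3+2m^2n+3mn^2+n^3$. *)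

(* Defs.v *)
From mathcomp Require Import all_boot all_order all_algebra.
Set Implicit Arguments. Unset Strict Implicit. Unset Printing Implicit Defensive.
Import Order.TTheory GRing.Theory Num.Theory.
Local Open Scope ring_scope.

Definition fc (c : rat) (x : rat) : rat := x ^+ 2 + c.

Definition min_period3 (c x : rat) : Prop :=
  iter 3 (fc c) x = x /\ (forall k : nat, (0 < k < 3)%N -> iter k (fc c) x <> x).

Definition orbit3_has_num (c x : rat) (S : seq int) : Prop :=
  numq x \in S \/ numq (fc c x) \in S \/ numq (fc c (fc c x)) \in S.

Definition has_3cycle_with_num (c : rat) (S : seq int) : Prop :=
  exists x : rat, min_period3 c x /\ orbit3_has_num c x S.

(* Main.v *)
From Stdlib Require Import ZArith Lia Znumtheory List Bool Reals Lra Psatz.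

Module Thue.
Local Open Scope Z_scope.

Record Ot := mkO { o0 : Z; o1 : Z; o2 : Z }.
Definition Oadd (x y : Ot) := mkO (o0 x + o0 y) (o1 x + o1 y) (o2 x + o2 y).
Definition Oopp (x : Ot) := mkO (- o0 x) (- o1 x) (- o2 x).
Definition Osub (x y : Ot) := Oadd x (Oopp y).
Definition Omul (x y : Ot) :=
  let a := o0 x in let b := o1 x in let c := o2 x in
  let d := o0 y in let e := o1 y in let f := o2 y in
  mkO (a*d + (b*f + c*e)) (a*e + b*d + (b*f + c*e) + c*f) (a*f + b*e + c*d + c*f).
Definition O0 := mkO 0 0 0.
Definition O1 := mkO 1 0 0.
Definition inj (z : Z) := mkO z 0 0.
Definition th := mkO 0 1 0.
Definition thi := mkO (-1) 0 1.

Lemma Oext x y : o0 x = o0 y -> o1 x = o1 y -> o2 x = o2 y -> x = y.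
Proof. destruct x, y; simpl; intros; subst; reflexivity. Qed.

Lemma Oring : ring_theory O0 O1 Oadd Omul Osub Oopp (@eq Ot).
Proof.
  constructor; intros;
  repeat match goal with x : Ot |- _ => destruct x end;
  apply Oext; unfold Osub, Oadd, Oopp, Omul, O0, O1; cbn [o0 o1 o2]; ring.
Qed.
Add Ring Oring : Oring.

Lemma inj_add a b : inj (a + b) = Oadd (inj a) (inj b).
Proof. apply Oext; cbn [o0 o1 o2 inj Omul Oadd]; ring. Qed.
Lemma inj_mul a b : inj (a * b) = Omul (inj a) (inj b).
Proof. apply Oext; cbn [o0 o1 o2 inj Omul Oadd]; ring. Qed.
Lemma o1_add x y : o1 (Oadd x y) = o1 x + o1 y.
Proof. reflexivity. Qed.
Lemma o1_inj z w : o1 (Omul (inj z) w) = z * o1 w.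
Proof. destruct w; cbn [o0 o1 o2 inj Omul]; ring. Qed.
Lemma th_thi : Omul th thi = O1.
Proof. apply Oext; reflexivity. Qed.

Infix "+o" := Oadd (at level 50, left associativity).
Infix "-o" := Osub (at level 50, left associativity).
Infix "*o" := Omul (at level 40, left associativity).

Fixpoint Opow (x : Ot) (n : nat) : Ot :=
  match n with O => O1 | S n => Opow x n *o x end.

Definition pw (j : Z) : Ot :=
  if (0 <=? j) then Opow th (Z.to_nat j) else Opow thi (Z.to_nat (- j)).

Lemma Opow_add x n m : Opow x (n + m) = Opow x n *o Opow x m.
Proof. induction m; simpl. rewrite Nat.add_0_r; ring.
  rewrite Nat.add_succ_r; simpl; rewrite IHm; ring. Qed.

Lemma Opow_mul x n m : Opow x (n * m) = Opow (Opow x n) m.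
Proof. induction m; simpl. rewrite Nat.mul_0_r; reflexivity.
  rewrite Nat.mul_succ_r, Opow_add, IHm; reflexivity. Qed.

Lemma pw_succ j : pw (j + 1) = pw j *o th.
Proof.
  unfold pw. destruct (Z.leb_spec 0 j).
  - rewrite (proj2 (Z.leb_le 0 (j+1))) by lia.
    replace (Z.to_nat (j+1)) with (S (Z.to_nat j)) by lia. reflexivity.
  - destruct (Z.eq_dec j (-1)).
    + subst. simpl. apply Oext; reflexivity.
    + rewrite (proj2 (Z.leb_gt 0 (j+1))) by lia.
      replace (Z.to_nat (-j)) with (S (Z.to_nat (-(j+1)))) by lia.
      simpl. transitivity (Opow thi (Z.to_nat (- (j + 1))) *o (thi *o th)).
      rewrite (Oext (thi *o th) O1) by reflexivity. ring. ring.
Qed.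

Lemma pw_pred j : pw (j - 1) = pw j *o thi.
Proof.
  replace (pw j) with (pw (j - 1 + 1)) by (f_equal; ring).
  rewrite pw_succ. transitivity (pw (j-1) *o (th *o thi)).
  rewrite th_thi; ring. ring.
Qed.

Lemma pw_add a b : pw (a + b) = pw a *o pw b.
Proof.
  induction b using Z.peano_ind.
  - rewrite Z.add_0_r. unfold pw at 3. simpl. ring.
  - replace (a + Z.succ b) with (a + b + 1) by lia. rewrite <- Z.add_1_r, !pw_succ, IHb. ring.
  - replace (a + Z.pred b) with (a + b - 1) by lia. rewrite <- Z.sub_1_r, !pw_pred, IHb. ring.
Qed.

Lemma pw0 : pw 0 = O1. Proof. reflexivity. Qed.

Lemma pw_nat (n : nat) : pw (Z.of_nat n) = Opow th n.
Proof. unfold pw. rewrite (proj2 (Z.leb_le 0 _)) by lia. rewrite Nat2Z.id. reflexivity. Qed.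

Lemma pw_mul_nat a (n : nat) : pw (a * Z.of_nat n) = Opow (pw a) n.
Proof. induction n. rewrite Z.mul_0_r. reflexivity.
  rewrite Nat2Z.inj_succ, Z.mul_succ_r, pw_add, IHn. reflexivity. Qed.

Definition cong (p : Z) (x y : Ot) := exists w, x = y +o inj p *o w.

Lemma cong_refl p x : cong p x x.
Proof. exists O0. ring. Qed.
Lemma cong_sym p x y : cong p x y -> cong p y x.
Proof. intros [w ->]. exists (Oopp w). ring. Qed.
Lemma cong_trans p x y z : cong p x y -> cong p y z -> cong p x z.
Proof. intros [w ->] [v ->]. exists (w +o v). ring. Qed.
Lemma cong_add p x y x' y' : cong p x y -> cong p x' y' -> cong p (x +o x') (y +o y').
Proof. intros [w ->] [v ->]. exists (w +o v). ring. Qed.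
Lemma cong_mul p x y x' y' : cong p x y -> cong p x' y' -> cong p (x *o x') (y *o y').
Proof. intros [w ->] [v ->]. exists (w *o y' +o y *o v +o inj p *o w *o v). ring. Qed.
Lemma cong_o1 p x y : cong p x y -> (p | o1 x - o1 y).
Proof. intros [w ->]. rewrite o1_add, o1_inj. exists (o1 w). ring. Qed.

Fixpoint tri (n : nat) : Z := match n with O => 0 | S k => tri k + Z.of_nat k end.
Lemma tri2 n : 2 * tri n = Z.of_nat n * (Z.of_nat n - 1).
Proof. induction n; simpl tri. reflexivity. rewrite Nat2Z.inj_succ. nia. Qed.

Lemma binom X n : exists S, Opow (O1 +o X) n =
  O1 +o inj (Z.of_nat n) *o X +o inj (tri n) *o X *o X +o X *o X *o X *o S.
Proof.
  induction n as [|n [S IH]].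
  - exists O0. destruct X; apply Oext; cbn [Opow Omul Oadd inj O1 O0 o0 o1 o2 Z.of_nat tri]; ring.
  - exists (inj (tri n) +o S +o S *o X). simpl Opow. rewrite IH.
    simpl tri. rewrite Nat2Z.inj_succ, <- Z.add_1_r, !inj_add.
    replace (inj 1) with O1 by reflexivity. ring.
Qed.

Lemma lemmaD (p q : Z) (beta : Ot) : p = 2 * q + 1 -> 1 <= q ->
  forall d : nat, (1 <= d)%nat ->
  exists (s : nat) Zz c, (1 <= s)%nat /\
    Opow (O1 +o inj p *o beta) d = O1 +o inj (p ^ Z.of_nat s) *o Zz /\
    cong p Zz (inj c *o beta) /\ ~ (p | c).
Proof.
  intros Hp Hq d. induction d as [d IH] using (well_founded_induction lt_wf).
  intros Hd.
  set (P := Z.to_nat p).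
  assert (HP : Z.of_nat P = p) by (unfold P; lia).
  destruct (Nat.eq_dec (d mod P) 0) as [Hm|Hm].
  - assert (Hdd : (d = (d / P) * P)%nat).
    { rewrite (Nat.div_mod d P) at 1 by lia. rewrite Hm. lia. }
    assert (H1 : (1 <= d / P)%nat).
    { destruct (d / P)%nat eqn:E; lia. }
    assert (H2 : (d / P < d)%nat). { apply Nat.div_lt; lia. }
    destruct (IH _ H2 H1) as (s & Zz & c & Hs & Heq & Hc & Hnd).
    destruct (binom (inj (p ^ Z.of_nat s) *o Zz) P) as [Sx HS].
    destruct s as [|t]; [lia|].
    set (e := p ^ Z.of_nat t).
    assert (Hps : p ^ Z.of_nat (S t) = p * e).
    { unfold e. rewrite Nat2Z.inj_succ, Z.pow_succ_r by lia. ring. }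
    assert (Htri : tri P = p * q).
    { pose proof (tri2 P). rewrite HP in H. nia. }
    exists (S (S t)), (Zz +o inj p *o (inj q *o inj e *o Zz *o Zz +o inj e *o inj e *o Zz *o Zz *o Zz *o Sx)), c.
    split; [lia|]. split.
    + rewrite Hdd, Opow_mul, Heq, HS, HP, Htri, Hps.
      replace (p ^ Z.of_nat (S (S t))) with (p * (p * e)).
      2:{ rewrite Nat2Z.inj_succ, Z.pow_succ_r, <- Hps by lia. ring. }
      rewrite !inj_mul. ring.
    + split; [|exact Hnd]. eapply cong_trans; [|exact Hc].
      eexists. reflexivity.
  - destruct (binom (inj p *o beta) d) as [Sx HS].
    exists 1%nat, (inj (Z.of_nat d) *o beta +o inj p *o (inj (tri d) *o beta *o beta +o inj p *o beta *o beta *o beta *o Sx)), (Z.of_nat d).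
    split; [lia|]. split.
    + rewrite HS. change (Z.of_nat 1) with 1. rewrite Z.pow_1_r. ring.
    + split. eexists; reflexivity.
      intros [k Hk]. apply Hm. rewrite <- HP in Hk.
      apply Nat.Lcm0.mod_divide. exists (Z.to_nat k). lia.
Qed.

Lemma cong_pow p x n : cong p x O1 -> cong p (Opow x n) O1.
Proof. intros H. induction n. apply cong_refl. simpl.
  apply cong_trans with (O1 *o O1). apply cong_mul; auto.
  replace (O1 *o O1) with O1 by ring; apply cong_refl. Qed.

Lemma per L p beta : pw L = O1 +o inj p *o beta -> forall q, cong p (pw (L * q)) O1.
Proof.
  intros HL q.
  assert (H1 : cong p (pw L) O1) by (rewrite HL; eexists; reflexivity).
  assert (H2 : cong p (pw (-L)) O1).
  { assert (E : pw (-L) *o pw L = O1) by (rewrite <- pw_add; replace (-L+L) with 0 by ring; reflexivity).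
    exists (Oopp (beta *o pw (-L))).
    transitivity (pw (-L) *o (pw L -o inj p *o beta)). rewrite HL; ring.
    transitivity (pw (-L) *o pw L -o inj p *o beta *o pw (-L)). ring. rewrite E. ring. }
  destruct (Z_le_gt_dec 0 q).
  - replace q with (Z.of_nat (Z.to_nat q)) by lia. rewrite pw_mul_nat. now apply cong_pow.
  - replace (L * q) with (-L * Z.of_nat (Z.to_nat (-q))) by lia. rewrite pw_mul_nat. now apply cong_pow.
Qed.

Lemma uniq (g beta : Ot) p q P r : p = 2 * q + 1 -> 1 <= q -> 0 < P ->
  pw P = O1 +o inj p *o beta -> Z.gcd p (o1 (g *o pw r *o beta)) = 1 ->
  forall k1 k2, o1 (g *o pw (r + P * k1)) = 0 -> o1 (g *o pw (r + P * k2)) = 0 -> k1 = k2.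
Proof.
  intros Hp Hq HP HY Hg.
  assert (main : forall k1 k2, k1 < k2 -> o1 (g *o pw (r + P * k1)) = 0 -> o1 (g *o pw (r + P * k2)) = 0 -> False).
  { intros k1 k2 Hlt Z1 Z2.
    set (d := Z.to_nat (k2 - k1)).
    assert (Hd : (1 <= d)%nat) by (unfold d; lia).
    destruct (lemmaD p q beta Hp Hq d Hd) as (s & Zz & c & Hs & Heq & Hc & Hnd).
    assert (E : pw (r + P * k2) = pw (r + P * k1) *o Opow (pw P) d).
    { rewrite <- pw_mul_nat, <- pw_add. f_equal. unfold d. lia. }
    rewrite E, HY, Heq in Z2.
    replace (g *o (pw (r + P * k1) *o (O1 +o inj (p ^ Z.of_nat s) *o Zz)))
      with (g *o pw (r + P * k1) +o inj (p ^ Z.of_nat s) *o (g *o pw (r + P * k1) *o Zz)) in Z2 by ring.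
    rewrite o1_add, o1_inj, Z1 in Z2.
    assert (Z3 : o1 (g *o pw (r + P * k1) *o Zz) = 0).
    { assert (p ^ Z.of_nat s <> 0) by (apply Z.pow_nonzero; lia). nia. }
    assert (C : cong p (g *o pw (r + P * k1) *o Zz) (inj c *o (g *o pw r *o beta))).
    { replace (inj c *o (g *o pw r *o beta)) with (g *o (pw r *o O1) *o (inj c *o beta)) by ring.
      apply cong_mul; [|exact Hc]. rewrite pw_add. apply cong_mul. apply cong_refl.
      apply cong_mul. apply cong_refl. eapply per; eauto. }
    apply cong_o1 in C. rewrite Z3, o1_inj in C.
    apply Hnd. apply Z.gauss with (o1 (g *o pw r *o beta)).
    - destruct C as [k Hk]. exists (-k). nia.
    - exact Hg. }
  intros k1 k2 Z1 Z2. destruct (Z.lt_trichotomy k1 k2) as [H|[H|H]]; auto.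
  exfalso; eauto. exfalso; eauto.
Qed.

Definition zrange (lo n : Z) : list Z := map (fun i => lo + Z.of_nat i) (seq 0 (Z.to_nat n)).
Lemma in_zrange x lo n : 0 <= n -> lo <= x < lo + n -> In x (zrange lo n).
Proof. intros Hn H. unfold zrange. apply in_map_iff. exists (Z.to_nat (x - lo)).
  split. lia. apply in_seq. lia. Qed.

Local Open Scope bool_scope.
Definition chk (g : Ot) (p P : Z) (beta : Ot) (zs : list Z) (p2 L : Z) : bool :=
  forallb (fun r =>
     if negb (o1 (g *o pw r) mod p =? 0) then true else
     if existsb (fun z => (z mod P =? r) && (Z.gcd p (o1 (g *o pw r *o beta)) =? 1)
                          && (o1 (g *o pw z) =? 0)) zs then true else
     forallb (fun i => negb (o1 (g *o pw (r + P * i)) mod p2 =? 0)) (zrange 0 (L / P)))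
   (zrange 0 P).

Lemma per_o1 g L p beta j : 0 < L -> pw L = O1 +o inj p *o beta ->
  (p | o1 (g *o pw j) - o1 (g *o pw (j mod L))).
Proof.
  intros HL HY. apply cong_o1.
  rewrite (Z.div_mod j L) at 1 by lia. rewrite Z.add_comm, pw_add.
  apply cong_trans with (g *o (pw (j mod L) *o O1)).
  - apply cong_mul. apply cong_refl. apply cong_mul. apply cong_refl. eapply per. exact HY.
  - replace (g *o (pw (j mod L) *o O1)) with (g *o pw (j mod L)) by ring. apply cong_refl.
Qed.

Lemma skolem g p q P beta zs p2 L beta2 : p = 2 * q + 1 -> 1 <= q -> 0 < P ->
  pw P = O1 +o inj p *o beta -> 0 < L -> (P | L) -> 0 < p2 -> pw L = O1 +o inj p2 *o beta2 ->
  chk g p P beta zs p2 L = true ->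
  forall j, o1 (g *o pw j) = 0 -> In j zs.
Proof.
  intros Hp Hq HP HY HL HPL Hp2 HY2 Hc j Hj.
  unfold chk in Hc. rewrite forallb_forall in Hc.
  set (r := j mod P).
  assert (Hr : 0 <= r < P) by (apply Z.mod_pos_bound; lia).
  specialize (Hc r (in_zrange r 0 P ltac:(lia) ltac:(lia))).
  assert (Hpr : (p | o1 (g *o pw r))).
  { pose proof (per_o1 g P p beta j HP HY) as H. rewrite Hj in H. fold r in H.
    destruct H as [k Hk]. exists (-k). lia. }
  destruct (negb (o1 (g *o pw r) mod p =? 0)) eqn:Hc1.
  - exfalso. apply negb_true_iff, Z.eqb_neq in Hc1. apply Hc1.
    apply Z.mod_divide. lia. exact Hpr.
  - destruct (existsb _ zs) eqn:Hc2.
    + apply existsb_exists in Hc2 as (z & Hz & Hc3).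
      apply andb_true_iff in Hc3 as [Hc3 Hz0]. apply andb_true_iff in Hc3 as [Hzr Hg].
      apply Z.eqb_eq in Hzr, Hg, Hz0.
      assert (E : j / P = z / P).
      { apply (uniq g beta p q P r Hp Hq HP HY Hg).
        - replace (r + P * (j / P)) with j. exact Hj.
          unfold r. pose proof (Z.div_mod j P). lia.
        - replace (r + P * (z / P)) with z. exact Hz0.
          rewrite <- Hzr. pose proof (Z.div_mod z P). lia. }
      replace j with z. exact Hz.
      rewrite (Z.div_mod j P), (Z.div_mod z P) by lia. fold r. rewrite Hzr, E. reflexivity.
    + exfalso. rewrite forallb_forall in Hc.
      set (s := j mod L).
      assert (Hs : 0 <= s < L) by (apply Z.mod_pos_bound; lia).
      assert (Hsr : s mod P = r) by (unfold s, r; apply Z.mod_mod_divide; exact HPL).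
      destruct HPL as [m Hm].
      assert (Hi : In (s / P) (zrange 0 (L / P))).
      { apply in_zrange. rewrite Hm, Z.div_mul by lia. nia.
        split. apply Z.div_pos; lia. rewrite Hm, Z.div_mul by lia.
        apply Z.div_lt_upper_bound; lia. }
      specialize (Hc _ Hi). apply negb_true_iff, Z.eqb_neq in Hc. apply Hc.
      replace (r + P * (s / P)) with s by (rewrite <- Hsr; pose proof (Z.div_mod s P); lia).
      apply Z.mod_divide. lia.
      pose proof (per_o1 g L p2 beta2 j HL HY2) as H. rewrite Hj in H. fold s in H.
      destruct H as [k Hk]. exists (-k). lia.
Qed.

Local Open Scope Z_scope.

Definition Nm (y : Ot) : Z :=
  let a := o0 y in let b := o1 y in let c := o2 y in
  a*((a+c)*(a+c) - (b+c)*b) - c*(b*(a+c) - (b+c)*c) + b*(b*b - (a+c)*c).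

Lemma Nm_th y : Nm (th *o y) = Nm y.
Proof. destruct y as [a b c]; unfold Nm, Omul, th, thi; cbn [o0 o1 o2]; ring. Qed.
Lemma Nm_thi y : Nm (thi *o y) = Nm y.
Proof. destruct y as [a b c]; unfold Nm, Omul, th, thi; cbn [o0 o1 o2]; ring. Qed.
Lemma Nm_pw j y : Nm (pw j *o y) = Nm y.
Proof.
  induction j using Z.peano_ind.
  - replace (pw 0 *o y) with y by (rewrite pw0; ring). reflexivity.
  - rewrite <- Z.add_1_r, pw_succ. replace (pw j *o th *o y) with (th *o (pw j *o y)) by ring.
    now rewrite Nm_th.
  - rewrite <- Z.sub_1_r, pw_pred. replace (pw j *o thi *o y) with (thi *o (pw j *o y)) by ring.
    now rewrite Nm_thi.
Qed.

Local Open Scope R_scope.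
Section Rho.
Variable rho : R.
Hypothesis Hrho : rho ^ 3 = rho + 1.
Hypothesis Hlo : 13247 / 10000 < rho.
Hypothesis Hhi : rho < 13248 / 10000.

Definition Lr (y : Ot) : R := IZR (o0 y) + IZR (o1 y) * rho + IZR (o2 y) * rho ^ 2.
Definition Qr (y : Ot) : R :=
  let a := IZR (o0 y) in let b := IZR (o1 y) in let c := IZR (o2 y) in
  a*a - rho*a*b + (2 - rho^2)*a*c + (rho^2-1)*b*b - b*c + (rho^2-1)^2*c*c.

Lemma NLQ_R (a b c : R) :
  a*((a+c)*(a+c) - (b+c)*b) - c*(b*(a+c) - (b+c)*c) + b*(b*b - (a+c)*c) =
  (a + b * rho + c * rho ^ 2) *
  (a*a - rho*a*b + (2 - rho^2)*a*c + (rho^2-1)*b*b - b*c + (rho^2-1)^2*c*c).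
Proof.
  assert (E : a*((a+c)*(a+c) - (b+c)*b) - c*(b*(a+c) - (b+c)*c) + b*(b*b - (a+c)*c) -
  (a + b * rho + c * rho ^ 2) *
  (a*a - rho*a*b + (2 - rho^2)*a*c + (rho^2-1)*b*b - b*c + (rho^2-1)^2*c*c) =
  (rho^3 - rho - 1) * ((-1)*c^3 + 1*c^3*rho + (-1)*c^3*rho^3 + 1*b*c^2 + (-1)*b*c^2*rho^2 + (-1)*b^2*c*rho + (-1)*b^3 + 2*a*b*c)) by ring.
  rewrite Hrho in E. replace (rho + 1 - rho - 1) with 0 in E by ring. lra.
Qed.

Lemma NLQ y : IZR (Nm y) = Lr y * Qr y.
Proof.
  destruct y as [a b c]. unfold Nm, Lr, Qr; cbn [o0 o1 o2]; cbv zeta.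
  repeat (rewrite ?plus_IZR, ?mult_IZR, ?minus_IZR, ?opp_IZR).
  apply NLQ_R.
Qed.

Lemma QS y : 4 * Qr y - (3 * IZR (o0 y) + 2 * IZR (o2 y) - Lr y) ^ 2 =
  (3 * rho ^ 2 - 4) * (IZR (o1 y) - IZR (o2 y) * rho) ^ 2.
Proof.
  destruct y as [a b c]. unfold Lr, Qr; cbn [o0 o1 o2]; cbv zeta.
  set (A := IZR a); set (B := IZR b); set (C := IZR c).
  assert (E : 4 * (A*A - rho*A*B + (2 - rho^2)*A*C + (rho^2-1)*B*B - B*C + (rho^2-1)^2*C*C) -
    (3 * A + 2 * C - (A + B * rho + C * rho ^ 2)) ^ 2 -
    (3 * rho ^ 2 - 4) * (B - C * rho) ^ 2 = (rho^3 - rho - 1) * (4 * B * C)) by ring.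
  rewrite Hrho in E. replace (rho + 1 - rho - 1) with 0 in E by ring. lra.
Qed.

Lemma Lr_th y : Lr (th *o y) = rho * Lr y.
Proof.
  destruct y as [a b c]. unfold Lr, Omul, th; cbn [o0 o1 o2].
  repeat (rewrite ?plus_IZR, ?mult_IZR, ?minus_IZR, ?opp_IZR).
  replace (IZR 0) with 0 by reflexivity. replace (IZR 1) with 1 by reflexivity.
  replace (rho * (IZR a + IZR b * rho + IZR c * rho ^ 2)) with
    (IZR a * rho + IZR b * rho^2 + IZR c * rho^3) by ring. rewrite Hrho. ring.
Qed.

Lemma Lr_thi y : rho * Lr (thi *o y) = Lr y.
Proof.
  rewrite <- Lr_th. f_equal. transitivity ((th *o thi) *o y). ring. rewrite th_thi. ring.
Qed.

Lemma box_bound y : (1 <= Z.abs (Nm y) <= 25)%Z ->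
  (1 <= Lr y < rho \/ - rho < Lr y <= -1) ->
  (-7 <= o0 y <= 7 /\ -15 <= o1 y <= 15 /\ -5 <= o2 y <= 5)%Z.
Proof.
  intros HK HL.
  pose proof (NLQ y) as HN. pose proof (QS y) as HS.
  set (L := Lr y) in *. set (Q := Qr y) in *.
  set (a := IZR (o0 y)) in *. set (b := IZR (o1 y)) in *. set (c := IZR (o2 y)) in *.
  assert (HK2 : -25 <= IZR (Nm y) <= 25).
  { split; [replace (-25) with (IZR (-25)) by reflexivity|replace 25 with (IZR 25) by reflexivity]; apply IZR_le; lia. }
  assert (H34 : 3 * rho ^ 2 - 4 >= 126/100) by (clear - Hlo; nra).
  set (s := 3 * a + 2 * c - L) in *. set (v := b - c * rho) in *.
  assert (Hv2 : 0 <= (3 * rho ^ 2 - 4) * v ^ 2) by (apply Rmult_le_pos; [lra | apply pow2_ge_0]).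
  assert (Hs2 : 0 <= s ^ 2) by apply pow2_ge_0.
  assert (HQ0 : 0 <= Q) by lra.
  assert (HQ : Q <= 25).
  { destruct HL as [[H1 H2]|[H1 H2]]; clear - HN HK2 HQ0 H1 H2; nra. }
  assert (Hs : -10 <= s <= 10) by (clear - Hs2 HS HQ HQ0 Hv2; nra).
  assert (Hv : -9 <= v <= 9) by (clear - H34 Hv2 HS HQ Hs2; nra).
  assert (HL2 : - 13248 / 10000 <= L <= 13248 / 10000) by (destruct HL; lra).
  assert (Hid : c * (2 * rho ^ 2 - 2 / 3) = 2 / 3 * L - s / 3 - v * rho).
  { unfold s, v, L, Lr. fold a b c. field. }
  assert (Hvr : -9 * (13248 / 10000) <= v * rho <= 9 * (13248 / 10000)) by (clear - Hv Hlo Hhi; nra).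
  assert (Hr2 : 2 * rho ^ 2 - 2 / 3 >= 284/100) by (clear - Hlo; nra).
  assert (Hc : -6 < c < 6) by (clear - Hid Hvr Hr2 HL2 Hs; split; nra).
  assert (Hc' : (-5 <= o2 y <= 5)%Z).
  { destruct Hc as [H1 H2]. apply lt_IZR in H1. apply lt_IZR in H2. lia. }
  assert (Hc2 : -5 <= c <= 5) by (split; unfold c; apply IZR_le; lia).
  assert (Hcr : -5 * (13248 / 10000) <= c * rho <= 5 * (13248 / 10000)) by (clear - Hc2 Hlo Hhi; nra).
  assert (Hb : -16 < b < 16) by (unfold v in Hv; lra).
  assert (Hb' : (-15 <= o1 y <= 15)%Z).
  { destruct Hb as [H1 H2]. apply lt_IZR in H1. apply lt_IZR in H2. lia. }
  assert (Ha : -8 < a < 8) by (unfold s in Hs; lra).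
  assert (Ha' : (-7 <= o0 y <= 7)%Z).
  { destruct Ha as [H1 H2]. apply lt_IZR in H1. apply lt_IZR in H2. lia. }
  auto.
Qed.

Lemma rho_pos : 0 < rho. Proof. lra. Qed.

Lemma pow_big M : exists n, M < rho ^ n.
Proof.
  destruct (Pow_x_infinity rho ltac:(rewrite Rabs_right; lra) (M + 1)) as [N HN].
  exists N. specialize (HN N (le_n N)). rewrite Rabs_right in HN. lra.
  apply Rle_ge, pow_le. lra.
Qed.

Lemma Lr_pw_succ j x : Lr (pw (j + 1) *o x) = rho * Lr (pw j *o x).
Proof. rewrite pw_succ, <- Lr_th. f_equal. ring. Qed.

Lemma up_lem n : forall x, 1 <= Rabs (Lr x) < rho ^ S n ->
  exists j, 1 <= Rabs (Lr (pw j *o x)) < rho.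
Proof.
  induction n; intros x [H1 H2].
  - exists 0%Z. replace (pw 0 *o x) with x by (rewrite pw0; ring). simpl in H2. lra.
  - destruct (Rlt_le_dec (Rabs (Lr x)) rho).
    + exists 0%Z. replace (pw 0 *o x) with x by (rewrite pw0; ring). lra.
    + assert (E := Lr_thi x).
      assert (Hx : Rabs (Lr x) = rho * Rabs (Lr (thi *o x))).
      { rewrite <- E, Rabs_mult, (Rabs_right rho); lra. }
      destruct (IHn (thi *o x)) as [j Hj].
      { rewrite Hx in r, H2. split.
        - apply Rmult_le_reg_l with rho; lra.
        - apply Rmult_lt_reg_l with rho. lra. rewrite <- tech_pow_Rmult. exact H2. }
      exists (j - 1)%Z. rewrite pw_pred. replace (pw j *o thi *o x) with (pw j *o (thi *o x)) by ring.
      exact Hj.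
Qed.

Lemma down_lem n : forall x, 1 <= rho ^ n * Rabs (Lr x) -> Rabs (Lr x) < rho ->
  exists j, 1 <= Rabs (Lr (pw j *o x)) < rho.
Proof.
  induction n; intros x H1 H2.
  - exists 0%Z. replace (pw 0 *o x) with x by (rewrite pw0; ring). simpl in H1. lra.
  - destruct (Rle_lt_dec 1 (Rabs (Lr x))).
    + exists 0%Z. replace (pw 0 *o x) with x by (rewrite pw0; ring). lra.
    + assert (Hx : Rabs (Lr (th *o x)) = rho * Rabs (Lr x)).
      { rewrite Lr_th, Rabs_mult, (Rabs_right rho); lra. }
      destruct (IHn (th *o x)) as [j Hj].
      { rewrite Hx. simpl in H1. lra. }
      { rewrite Hx. nra. }
      exists (j + 1)%Z. rewrite pw_succ. replace (pw j *o th *o x) with (pw j *o (th *o x)) by ring.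
      exact Hj.
Qed.

Lemma norm_exists x : Lr x <> 0 -> exists j, 1 <= Rabs (Lr (pw j *o x)) < rho.
Proof.
  intros H. pose proof (Rabs_pos_lt _ H) as Hp.
  destruct (Rle_lt_dec 1 (Rabs (Lr x))).
  - destruct (pow_big (Rabs (Lr x))) as [n Hn].
    apply (up_lem n). split. lra. simpl.
    assert (1 <= rho) by lra.
    assert (0 <= rho ^ n) by (apply pow_le; lra). nra.
  - destruct (pow_big (/ Rabs (Lr x))) as [n Hn].
    apply (down_lem n). 
    apply Rmult_lt_compat_r with (r := Rabs (Lr x)) in Hn; [|lra].
    rewrite Rinv_l in Hn; lra. lra.
Qed.
End Rho.


Lemma rho_exists : exists rho : R, (rho ^ 3 = rho + 1 /\ 13247 / 10000 < rho < 13248 / 10000)%R.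
Proof.
  destruct (IVT (fun x => x ^ 3 - x - 1)%R (13247 / 10000) (13248 / 10000)) as [z [Hz1 Hz2]].
  - apply derivable_continuous. reg.
  - lra.
  - lra.
  - lra.
  - exists z. split. lra. split.
    + destruct Hz1 as [H1 _]. destruct (Rle_lt_or_eq_dec _ _ H1) as [H|H]. exact H.
      subst z. lra.
    + destruct Hz1 as [_ H1]. destruct (Rle_lt_or_eq_dec _ _ H1) as [H|H]. exact H.
      subst z. lra.
Qed.

Local Open Scope Z_scope.
Lemma reduce x : 1 <= Z.abs (Nm x) <= 25 ->
  exists j y, x = pw j *o y /\ Nm y = Nm x /\
    -7 <= o0 y <= 7 /\ -15 <= o1 y <= 15 /\ -5 <= o2 y <= 5.
Proof.
  intros HK. destruct rho_exists as [rho [Hr [Hlo Hhi]]].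
  assert (HL : Lr rho x <> 0%R).
  { intros E. pose proof (NLQ rho Hr x) as HN. rewrite E, Rmult_0_l in HN.
    apply eq_IZR in HN. lia. }
  destruct (norm_exists rho Hr Hlo Hhi x HL) as [j Hj].
  exists (- j), (pw j *o x).
  assert (Hn : Nm (pw j *o x) = Nm x) by apply Nm_pw.
  split. transitivity (pw (-j + j) *o x). rewrite Z.add_opp_diag_l, pw0; ring. rewrite pw_add; ring.
  split. exact Hn.
  apply (box_bound rho Hr Hlo Hhi). rewrite Hn; exact HK.
  destruct (Rcase_abs (Lr rho (pw j *o x))) as [H|H].
  - rewrite Rabs_left in Hj by lra. right; lra.
  - rewrite Rabs_right in Hj by lra. left; lra.
Qed.

Import ListNotations.
Local Open Scope Z_scope.

Definition divO (x : Ot) (p : Z) := mkO (o0 x / p) (o1 x / p) (o2 x / p).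
Definition bet (P p : Z) := divO (pw P -o O1) p.

Definition g1 := mkO 3 0 (-1).
Definition g2 := mkO 2 (-2) 1.
Definition g3 := mkO 1 (-3) 1.
Definition g4 := mkO 4 0 (-3).
Definition g5 := mkO 2 3 (-4).
Definition g6 := mkO 5 1 (-3).
Definition g7 := mkO 1 4 (-3).
Definition glist := [g1; g2; g3; g4; g5; g6; g7].

Lemma Y58 : pw 58 = O1 +o inj 59 *o bet 58 59. Proof. vm_compute. reflexivity. Qed.
Lemma Y1392 : pw 1392 = O1 +o inj 7 *o bet 1392 7. Proof. vm_compute. reflexivity. Qed.
Lemma Y24 : pw 24 = O1 +o inj 5 *o bet 24 5. Proof. vm_compute. reflexivity. Qed.

Lemma z1 k : o1 (g1 *o pw k) = 0 -> In k [0].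
Proof. apply (skolem g1 59 29 58 (bet 58 59) [0] 7 1392 (bet 1392 7)); try lia.
  exact Y58. exists 24; lia. exact Y1392. vm_compute; reflexivity. Qed.
Lemma z2 k : o1 (g2 *o pw k) = 0 -> In k [5].
Proof. apply (skolem g2 59 29 58 (bet 58 59) [5] 7 1392 (bet 1392 7)); try lia.
  exact Y58. exists 24; lia. exact Y1392. vm_compute; reflexivity. Qed.
Lemma z3 k : o1 (g3 *o pw k) = 0 -> In k [-6; 4].
Proof. apply (skolem g3 59 29 58 (bet 58 59) [-6; 4] 59 58 (bet 58 59)); try lia.
  exact Y58. exists 1; lia. exact Y58. vm_compute; reflexivity. Qed.
Lemma z4 k : o1 (g4 *o pw k) = 0 -> In k [0].
Proof. apply (skolem g4 59 29 58 (bet 58 59) [0] 59 58 (bet 58 59)); try lia.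
  exact Y58. exists 1; lia. exact Y58. vm_compute; reflexivity. Qed.
Lemma z5 k : o1 (g5 *o pw k) = 0 -> In k [5].
Proof. apply (skolem g5 59 29 58 (bet 58 59) [5] 59 58 (bet 58 59)); try lia.
  exact Y58. exists 1; lia. exact Y58. vm_compute; reflexivity. Qed.
Lemma z6 k : o1 (g6 *o pw k) = 0 -> In k [4].
Proof. apply (skolem g6 59 29 58 (bet 58 59) [4] 59 58 (bet 58 59)); try lia.
  exact Y58. exists 1; lia. exact Y58. vm_compute; reflexivity. Qed.
Lemma z7 k : o1 (g7 *o pw k) = 0 -> In k [].
Proof. apply (skolem g7 5 2 24 (bet 24 5) [] 5 24 (bet 24 5)); try lia.
  exact Y24. exists 1; lia. exact Y24. vm_compute; reflexivity. Qed.

Definition Oeqb (x y : Ot) := (o0 x =? o0 y) && (o1 x =? o1 y) && (o2 x =? o2 y).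
Lemma Oeqb_eq x y : Oeqb x y = true -> x = y.
Proof. unfold Oeqb. intros H. apply andb_true_iff in H as [H H3]. apply andb_true_iff in H as [H1 H2].
  apply Z.eqb_eq in H1, H2, H3. apply Oext; auto. Qed.

Definition Ks := [11; 17; 19; 23; 25].
Definition inK (n : Z) := existsb (Z.eqb (Z.abs n)) Ks.

Definition repr (y : Ot) : bool :=
  existsb (fun g => existsb (fun e => existsb (fun i => Oeqb y (inj e *o pw i *o g)) (zrange (-12) 25)) [1; -1]) glist.

Definition boxchk : bool :=
  forallb (fun a => forallb (fun b => forallb (fun c =>
    let y := mkO a b c in if inK (Nm y) then repr y else true)
    (zrange (-5) 11)) (zrange (-15) 31)) (zrange (-7) 15).

Lemma boxchk_ok : boxchk = true. Proof. vm_compute. reflexivity. Qed.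

Lemma repr_ok y : repr y = true -> exists g e i, In g glist /\ (e = 1 \/ e = -1) /\ y = inj e *o pw i *o g.
Proof.
  unfold repr. intros H. apply existsb_exists in H as (g & Hg & H).
  apply existsb_exists in H as (e & He & H). apply existsb_exists in H as (i & _ & H).
  exists g, e, i. split; auto. split. simpl in He. destruct He as [<-|[<-|[]]]; auto.
  now apply Oeqb_eq.
Qed.

Lemma box_ok y : -7 <= o0 y <= 7 -> -15 <= o1 y <= 15 -> -5 <= o2 y <= 5 -> inK (Nm y) = true ->
  exists g e i, In g glist /\ (e = 1 \/ e = -1) /\ y = inj e *o pw i *o g.
Proof.
  intros Ha Hb Hc HK. apply repr_ok.
  pose proof boxchk_ok as B. unfold boxchk in B. rewrite forallb_forall in B.
  specialize (B (o0 y) (in_zrange (o0 y) (-7) 15 ltac:(lia) ltac:(lia))). rewrite forallb_forall in B.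
  specialize (B (o1 y) (in_zrange (o1 y) (-15) 31 ltac:(lia) ltac:(lia))). rewrite forallb_forall in B.
  specialize (B (o2 y) (in_zrange (o2 y) (-5) 11 ltac:(lia) ltac:(lia))).
  replace (mkO (o0 y) (o1 y) (o2 y)) with y in B by (destruct y; reflexivity).
  rewrite HK in B. exact B.
Qed.

Definition t1 (m n : Z) := m*m*m + 2*m*m*n + m*n*n + n*n*n.

Definition sols : list (Z * Z) :=
  [(3,-1);(-3,1);(1,2);(-1,-2);(2,1);(-2,-1);(9,-5);(-9,5);(4,-3);(-4,3);(1,-3);(-1,3);(2,-3);(-2,3)].

Lemma thue m n : In (Z.abs (t1 m n)) Ks -> In (m, n) sols.
Proof.
  intros HK. set (x := mkO m 0 n).
  assert (Hx : Nm x = t1 m n) by (unfold Nm, t1, x; cbn [o0 o1 o2]; ring).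
  destruct (reduce x) as (j & y & Ex & Hy & H0 & H1 & H2).
  { rewrite Hx. simpl in HK. lia. }
  destruct (box_ok y H0 H1 H2) as (g & e & i & Hg & He & Ey).
  { unfold inK. apply existsb_exists. exists (Z.abs (Nm y)). split. rewrite Hy, Hx; exact HK.
    apply Z.eqb_refl. }
  assert (Ex2 : x = inj e *o (g *o pw (j + i))) by (rewrite Ex, Ey, pw_add; ring).
  assert (Hz : o1 (g *o pw (j + i)) = 0).
  { assert (o1 x = 0) by reflexivity. rewrite Ex2, o1_inj in H. destruct He; subst e; lia. }
  assert (Hm : m = o0 x) by reflexivity. assert (Hn : n = o2 x) by reflexivity.
  rewrite Hm, Hn, Ex2. clear -Hg He Hz.
  simpl in Hg. destruct Hg as [<-|[<-|[<-|[<-|[<-|[<-|[<-|[]]]]]]]].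
  - apply z1 in Hz. destruct Hz as [<-|[]]; destruct He as [->| ->]; vm_compute; tauto.
  - apply z2 in Hz. destruct Hz as [<-|[]]; destruct He as [->| ->]; vm_compute; tauto.
  - apply z3 in Hz. destruct Hz as [<-|[<-|[]]]; destruct He as [->| ->]; vm_compute; tauto.
  - apply z4 in Hz. destruct Hz as [<-|[]]; destruct He as [->| ->]; vm_compute; tauto.
  - apply z5 in Hz. destruct Hz as [<-|[]]; destruct He as [->| ->]; vm_compute; tauto.
  - apply z6 in Hz. destruct Hz as [<-|[]]; destruct He as [->| ->]; vm_compute; tauto.
  - apply z7 in Hz. destruct Hz.
Qed.

Lemma thue' m n : (Z.abs (t1 m n) = 11 \/ Z.abs (t1 m n) = 17 \/ Z.abs (t1 m n) = 19 \/
    Z.abs (t1 m n) = 23 \/ Z.abs (t1 m n) = 25) ->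
  (m = 3 /\ n = -1) \/ (m = -3 /\ n = 1) \/ (m = 1 /\ n = 2) \/ (m = -1 /\ n = -2) \/
  (m = 2 /\ n = 1) \/ (m = -2 /\ n = -1) \/ (m = 9 /\ n = -5) \/ (m = -9 /\ n = 5) \/
  (m = 4 /\ n = -3) \/ (m = -4 /\ n = 3) \/ (m = 1 /\ n = -3) \/ (m = -1 /\ n = 3) \/
  (m = 2 /\ n = -3) \/ (m = -2 /\ n = 3).
Proof.
  intros H. assert (Hk : In (Z.abs (t1 m n)) Ks) by (simpl; lia). rename Hk into H'.
  apply thue in H'. simpl in H'.
  repeat (destruct H' as [H'|H']; [injection H' as <- <-; tauto|]). destruct H'.
Qed.

Lemma rp_pow3 a b : rel_prime a b -> rel_prime a (b * b * b).
Proof. intros H. repeat apply rel_prime_mult; auto. Qed.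

Lemma rp_shift a b k : rel_prime a b -> rel_prime a (b + k * a).
Proof. intros H. apply Zgcd_1_rel_prime. rewrite Z.gcd_add_mult_diag_r.
  now apply Zgcd_1_rel_prime. Qed.

Definition Dz (m n : Z) := 2 * m * n * (m + n).
Lemma coprime_t1 m n : Z.gcd m n = 1 -> Z.gcd (t1 m n) (Dz m n) = 1.
Proof.
  intros H. unfold Dz. apply Zgcd_1_rel_prime in H.
  assert (Hnm : rel_prime n m) by (apply rel_prime_sym; exact H).
  apply Zgcd_1_rel_prime.
  apply rel_prime_mult; [apply rel_prime_mult; [apply rel_prime_mult|]|]; apply rel_prime_sym.
  -
    assert (Ho : Z.odd (t1 m n) = true).
    { destruct (Z.odd m) eqn:Om, (Z.odd n) eqn:On;
      try (unfold t1; rewrite !Z.odd_add, !Z.odd_mul, Om, On; reflexivity).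
      exfalso. pose proof (Z.div2_odd m) as Em. pose proof (Z.div2_odd n) as En.
      rewrite Om in Em. rewrite On in En. simpl Z.b2z in Em, En.
      destruct H as [_ _ Hg]. specialize (Hg 2).
      assert (D : (2 | 1)). { apply Hg. exists (Z.div2 m); lia. exists (Z.div2 n); lia. }
      apply Z.divide_1_r in D. lia. }
    pose proof (Z.div2_odd (t1 m n)) as E. rewrite Ho in E. simpl Z.b2z in E.
    rewrite E. replace (2 * Z.div2 (t1 m n) + 1) with (1 + Z.div2 (t1 m n) * 2) by ring.
    apply rp_shift. apply rel_prime_sym, rel_prime_1.
  - replace (t1 m n) with (n * n * n + (m + n) * (m + n) * m) by (unfold t1; ring).
    apply rp_shift. apply rp_pow3. exact H.
  - replace (t1 m n) with (m * m * m + (2 * m * m + m * n + n * n) * n) by (unfold t1; ring).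
    apply rp_shift. apply rp_pow3. exact Hnm.
  - replace (t1 m n) with (n * n * n + (m * (m + n)) * (m + n)) by (unfold t1; ring).
    apply rp_shift. apply rp_pow3.
    apply Zgcd_1_rel_prime. replace (m + n) with (m + 1 * n) by ring.
    rewrite Z.gcd_comm, Z.gcd_add_mult_diag_r. rewrite Z.gcd_comm. now apply Zgcd_1_rel_prime.
Qed.

Definition Kp (z : Z) : Prop := z = 11 \/ z = 17 \/ z = 19 \/ z = 23 \/ z = 25.
Lemma thueK m n : Kp (Z.abs (t1 m n)) ->
  (m = 3 /\ n = -1) \/ (m = -3 /\ n = 1) \/ (m = 1 /\ n = 2) \/ (m = -1 /\ n = -2) \/
  (m = 2 /\ n = 1) \/ (m = -2 /\ n = -1) \/ (m = 9 /\ n = -5) \/ (m = -9 /\ n = 5) \/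
  (m = 4 /\ n = -3) \/ (m = -4 /\ n = 3) \/ (m = 1 /\ n = -3) \/ (m = -1 /\ n = 3) \/
  (m = 2 /\ n = -3) \/ (m = -2 /\ n = 3).
Proof. intros H. apply thue'. exact H. Qed.

End Thue.

Require Import Defs.
From mathcomp Require Import all_boot all_order all_algebra.
From mathcomp Require Import ring lra zify.
From mathcomp.zify Require Import ssrZ.
Import Order.TTheory GRing.Theory Num.Theory.
Local Open Scope ring_scope.

Definition t1i (m n : int) : int := m * m * m + 2 * m * m * n + m * n * n + n * n * n.

Lemma t1E m n : Z_of_int (t1i m n) = Thue.t1 (Z_of_int m) (Z_of_int n).
Proof. rewrite /t1i /Thue.t1. lia. Qed.

Lemma Zint_eq (m : int) (z : Z) : Z_of_int m = z -> m = int_of_Z z.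
Proof. by move<-; rewrite Z_of_intK. Qed.

Definition sols_int : seq (int * int) :=
  [:: (3,-1);(-3,1);(1,2);(-1,-2);(2,1);(-2,-1);(9,-5);(-9,5);(4,-3);(-4,3);(1,-3);(-1,3);(2,-3);(-2,3)].

Lemma thue_int (m n : int) : `|t1i m n| \in [:: 11; 17; 19; 23; 25] -> (m, n) \in sols_int.
Proof.
  move=> H. have HK : Thue.Kp (Z.abs (Thue.t1 (Z_of_int m) (Z_of_int n))).
  { rewrite -t1E /Thue.Kp. move: H. rewrite !inE.
    case/orP => [/eqP E|/orP [/eqP E|/orP [/eqP E|/orP [/eqP E|/eqP E]]]]; lia. }
  move: (Thue.thueK _ _ HK).
  do 13 (case; [case => /Zint_eq -> /Zint_eq ->; by [] |]).
  by case => /Zint_eq -> /Zint_eq ->.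
Qed.
Definition Aq (a b : rat) := a^+6 + 2*a^+5*b + 4*a^+4*b^+2 + 8*a^+3*b^+3 + 9*a^+2*b^+4 + 4*a*b^+5 + b^+6.
Definition Bq (a b : rat) := 4 * a^+2 * b^+2 * (a + b)^+2.

Lemma t1q (m n : int) : (t1i m n)%:~R = (m%:~R ^+ 3 + 2 * m%:~R ^+ 2 * n%:~R + m%:~R * n%:~R ^+ 2 + n%:~R ^+ 3 : rat).
Proof. rewrite /t1i. rewrite ?(rmorphD, rmorphM) /=. ring. Qed.
Lemma Dq (m n : int) : (2 * m * n * (m + n))%:~R = (2 * m%:~R * n%:~R * (m%:~R + n%:~R) : rat).
Proof. rewrite ?(rmorphD, rmorphM) /=. ring. Qed.

Lemma core (c x : rat) : min_period3 c x -> exists t : rat, t != 0 /\ 1 + t != 0 /\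
  x = (t + (1 + t) / t - 1 / (1 + t)) / 2 /\ c = t - x - x ^+ 2.
Proof.
  case=> H3 Hk.
  have H1 : fc c x <> x by apply: (Hk 1%N).
  have H2 : fc c (fc c x) <> x by apply: (Hk 2%N).
  move: H3 => /= H3.
  set y2 := fc c x in H1 H2 H3 *. set y3 := fc c y2 in H2 H3 *.
  have Ey2 : y2 = x ^+ 2 + c by [].
  have Ey3 : y3 = y2 ^+ 2 + c by [].
  have Ex : x = y3 ^+ 2 + c by rewrite -H3.
  set t := x + y2. set u := y2 + y3. set v := y3 + x.
  have hd : x - y2 != 0 by rewrite subr_eq0; apply/eqP => E; apply: H1; rewrite E.
  have E1 : y2 - y3 = (x - y2) * t.
  { have -> : y2 - y3 = (x ^+ 2 + c) - (y2 ^+ 2 + c) by rewrite -Ey2 -Ey3. rewrite /t; ring. }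
  have E2 : y3 - x = (y2 - y3) * u.
  { have -> : y3 - x = (y2 ^+ 2 + c) - (y3 ^+ 2 + c) by rewrite -Ey3 -Ex. rewrite /u; ring. }
  have E3 : x - y2 = (y3 - x) * v.
  { have -> : x - y2 = (y3 ^+ 2 + c) - (x ^+ 2 + c) by rewrite -Ex -Ey2. rewrite /v; ring. }
  have Htuv : t * u * v = 1.
  { apply: (mulfI hd). transitivity ((x - y2) * t * u * v). ring.
    rewrite -E1 -E2 -E3. ring. }
  have Hs : 1 + t + t * u = 0.
  { apply: (mulfI hd). rewrite mulr0.
    have : (x - y2) + (y2 - y3) + (y3 - x) = 0 by ring.
    rewrite E2 E1 => <-. ring. }
  have ht : t != 0.
  { apply/eqP => E. move: Htuv. rewrite E !mul0r => /eqP. by rewrite eq_sym oner_eq0. }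
  have ht1 : 1 + t != 0.
  { apply/eqP => E. have : t * u = 0 by rewrite -Hs E add0r.
    move: Htuv => /[swap] -> /eqP. by rewrite mul0r eq_sym oner_eq0. }
  have Hu : u = - (1 + t) / t.
  { apply: (mulfI ht). rewrite mulrCA divff // mulr1. rewrite -[RHS]add0r -Hs. ring. }
  have Hv : v = - 1 / (1 + t).
  { apply: (mulfI (mulf_neq0 ht (_ : u != 0))).
    - rewrite Hu. apply: mulf_neq0. by rewrite oppr_eq0. by rewrite invr_eq0.
    - rewrite Htuv Hu. field. by rewrite ht ht1. }
  exists t. split => //. split => //. split.
  - have : 2 * x = t - u + v by rewrite /t /u /v; ring.
    rewrite Hu Hv => E. have -> : x = (2 * x) / 2 by field. rewrite E. field.
    all: try by rewrite ?ht ?ht1.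
  - rewrite /t Ey2. ring.
Qed.

Lemma param (c x : rat) : min_period3 c x -> exists m n : int, 0 < n /\ coprimez m n /\ m != 0 /\ m + n != 0 /\
  x = (t1i m n)%:~R / (2 * m * n * (m + n))%:~R /\ c = - Aq m%:~R n%:~R / Bq m%:~R n%:~R.
Proof.
  move=> /core [t [ht [ht1 [Ex Ec]]]].
  exists (numq t), (denq t).
  have Et : t = (numq t)%:~R / (denq t)%:~R by rewrite divq_num_den.
  have hm : numq t != 0 by rewrite numq_eq0.
  have hn : denq t != 0 by rewrite denq_neq0.
  have hM : ((numq t)%:~R : rat) != 0 by rewrite intr_eq0.
  have hN : ((denq t)%:~R : rat) != 0 by rewrite intr_eq0.
  have hMN : ((numq t)%:~R + (denq t)%:~R : rat) != 0.
  { apply/eqP => E. move/eqP: ht1. apply. rewrite Et.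
    have -> : ((numq t)%:~R : rat) = - (denq t)%:~R by rewrite -[LHS]subr0 -E; ring.
    field. exact: hN. }
  have hmn : numq t + denq t != 0.
  { apply: contraNneq hMN => E. by rewrite -rmorphD /= E. }
  split; first exact: denq_gt0.
  move: Et hm hn hM hN hMN hmn. set m := numq t. set n := denq t. move=> Et hm hn hM hN hMN hmn.
  split; first by rewrite /m /n coprimezE coprime_num_den.
  split => //. split => //.
  split.
  - rewrite t1q Dq Ex Et. field. by rewrite hM hN hMN.
  - rewrite Ec Ex Et /Aq /Bq. field. by rewrite hM hN hMN.
Qed.

Lemma DE (m n : int) : Z_of_int (2 * m * n * (m + n)) = Thue.Dz (Z_of_int m) (Z_of_int n).
Proof. rewrite /Thue.Dz. lia. Qed.

Lemma copE (a b : int) : coprimez a b = Z.eqb (Z.gcd (Z_of_int a) (Z_of_int b)) (Zpos xH).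
Proof. lia. Qed.

Lemma cop_int (m n : int) : coprimez m n -> coprimez (t1i m n) (2 * m * n * (m + n)).
Proof.
  rewrite !copE t1E DE. move=> /Z.eqb_eq H. apply/Z.eqb_eq. exact: Thue.coprime_t1.
Qed.

Lemma numq_x (m n : int) : coprimez m n -> m != 0 -> n != 0 -> m + n != 0 ->
  `|numq ((t1i m n)%:~R / (2 * m * n * (m + n))%:~R : rat)| = `|t1i m n|.
Proof.
  move=> cop hm hn hmn. rewrite coprimeq_num; last by rewrite -coprimezE; apply: cop_int.
  rewrite normrM normr_sg. have -> : (2 * m * n * (m + n) != 0) by rewrite !mulf_neq0.
  by rewrite mul1r.
Qed.

Lemma shift (c x : rat) : min_period3 c x -> min_period3 c (fc c x).
Proof.
  case=> H3 Hk. move: (Hk 1%N erefl) => /= H1. move: H3 => /= H3.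
  split; first by rewrite /= H3.
  move=> k hk E; case: k hk E => [|[|[|k]]] //= _ E.
  - apply: H1. by rewrite -{1}H3 E.
  - apply: H1. by rewrite -{1}E.
Qed.

Lemma fwd (c : rat) (S : seq int) :
  all (fun z => z \in [:: 11; 17; 19; 23; 25]) [seq `|s| | s <- S] ->
  has_3cycle_with_num c S ->
  exists m n : int, (m, n) \in sols_int /\ 0 < n /\ `|t1i m n| \in [seq `|s| | s <- S] /\
    c = - Aq m%:~R n%:~R / Bq m%:~R n%:~R.
Proof.
  move=> /allP HS [x [Hx Hnum]].
  have [y [Hy HyS]] : exists y, min_period3 c y /\ numq y \in S.
  { case: Hnum => [H|[H|H]].
    - by exists x.
    - exists (fc c x); split => //. exact: shift.
    - exists (fc c (fc c x)); split => //. apply: shift. exact: shift. }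
  have [m [n [hn [cop [hm [hmn [Ey Ec]]]]]]] := param _ _ Hy.
  have hn0 : n != 0 by rewrite gt_eqF.
  have Hnum' : `|numq y| = `|t1i m n| by rewrite Ey numq_x.
  have HK : `|t1i m n| \in [seq `|s| | s <- S] by rewrite -Hnum'; apply: map_f.
  exists m, n. split; first by apply: thue_int; apply: HS.
  by split; [|split].
Qed.


Lemma partA_fwd (c : rat) : has_3cycle_with_num c [:: 11; -11; 17; -17; 25; -25] -> c = - 421 / 144.
Proof.
  move=> H. have [m [n [Hs [hn [HK Ec]]]]] := @fwd c [:: 11; -11; 17; -17; 25; -25] erefl H.
  move: Hs hn HK Ec. rewrite /sols_int !inE.
  case/orP; first (move=> /eqP [-> ->]; move=> hn; exfalso; exact: (Bool.diff_false_true hn)).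
  case/orP; first (move=> /eqP [-> ->]; move=> _ _ ->; rewrite /Aq /Bq; field; try done).
  case/orP; first (move=> /eqP [-> ->]; move=> _ _ ->; rewrite /Aq /Bq; field; try done).
  case/orP; first (move=> /eqP [-> ->]; move=> hn; exfalso; exact: (Bool.diff_false_true hn)).
  case/orP; first (move=> /eqP [-> ->]; move=> _ HK; exfalso; exact: (Bool.diff_false_true HK)).
  case/orP; first (move=> /eqP [-> ->]; move=> hn; exfalso; exact: (Bool.diff_false_true hn)).
  case/orP; first (move=> /eqP [-> ->]; move=> hn; exfalso; exact: (Bool.diff_false_true hn)).
  case/orP; first (move=> /eqP [-> ->]; move=> _ HK; exfalso; exact: (Bool.diff_false_true HK)).
  case/orP; first (move=> /eqP [-> ->]; move=> hn; exfalso; exact: (Bool.diff_false_true hn)).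
  case/orP; first (move=> /eqP [-> ->]; move=> _ HK; exfalso; exact: (Bool.diff_false_true HK)).
  case/orP; first (move=> /eqP [-> ->]; move=> hn; exfalso; exact: (Bool.diff_false_true hn)).
  case/orP; first (move=> /eqP [-> ->]; move=> _ HK; exfalso; exact: (Bool.diff_false_true HK)).
  case/orP; first (move=> /eqP [-> ->]; move=> hn; exfalso; exact: (Bool.diff_false_true hn)).
  (move=> /eqP [-> ->]; move=> _ _ ->; rewrite /Aq /Bq; field; try done).
Qed.

Lemma partB_fwd (c : rat) : has_3cycle_with_num c [:: 19; -19] -> c = - 301 / 144 \/ c = - (337 * 673) / 360 ^+ 2.
Proof.
  move=> H. have [m [n [Hs [hn [HK Ec]]]]] := @fwd c [:: 19; -19] erefl H.
  move: Hs hn HK Ec. rewrite /sols_int !inE.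
  case/orP; first (move=> /eqP [-> ->]; move=> hn; exfalso; exact: (Bool.diff_false_true hn)).
  case/orP; first (move=> /eqP [-> ->]; move=> _ HK; exfalso; exact: (Bool.diff_false_true HK)).
  case/orP; first (move=> /eqP [-> ->]; move=> _ HK; exfalso; exact: (Bool.diff_false_true HK)).
  case/orP; first (move=> /eqP [-> ->]; move=> hn; exfalso; exact: (Bool.diff_false_true hn)).
  case/orP; first (move=> /eqP [-> ->]; move=> _ _ ->; rewrite /Aq /Bq; left; field; try done).
  case/orP; first (move=> /eqP [-> ->]; move=> hn; exfalso; exact: (Bool.diff_false_true hn)).
  case/orP; first (move=> /eqP [-> ->]; move=> hn; exfalso; exact: (Bool.diff_false_true hn)).
  case/orP; first (move=> /eqP [-> ->]; move=> _ _ ->; rewrite /Aq /Bq; right; field; try done).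
  case/orP; first (move=> /eqP [-> ->]; move=> hn; exfalso; exact: (Bool.diff_false_true hn)).
  case/orP; first (move=> /eqP [-> ->]; move=> _ HK; exfalso; exact: (Bool.diff_false_true HK)).
  case/orP; first (move=> /eqP [-> ->]; move=> hn; exfalso; exact: (Bool.diff_false_true hn)).
  case/orP; first (move=> /eqP [-> ->]; move=> _ HK; exfalso; exact: (Bool.diff_false_true HK)).
  case/orP; first (move=> /eqP [-> ->]; move=> hn; exfalso; exact: (Bool.diff_false_true hn)).
  (move=> /eqP [-> ->]; move=> _ HK; exfalso; exact: (Bool.diff_false_true HK)).
Qed.

Lemma partC_fwd (c : rat) : has_3cycle_with_num c [:: 23; -23] -> c = - 301 / 144 \/ c = - 43 ^+ 2 / 24 ^+ 2.
Proof.
  move=> H. have [m [n [Hs [hn [HK Ec]]]]] := @fwd c [:: 23; -23] erefl H.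
  move: Hs hn HK Ec. rewrite /sols_int !inE.
  case/orP; first (move=> /eqP [-> ->]; move=> hn; exfalso; exact: (Bool.diff_false_true hn)).
  case/orP; first (move=> /eqP [-> ->]; move=> _ HK; exfalso; exact: (Bool.diff_false_true HK)).
  case/orP; first (move=> /eqP [-> ->]; move=> _ HK; exfalso; exact: (Bool.diff_false_true HK)).
  case/orP; first (move=> /eqP [-> ->]; move=> hn; exfalso; exact: (Bool.diff_false_true hn)).
  case/orP; first (move=> /eqP [-> ->]; move=> _ HK; exfalso; exact: (Bool.diff_false_true HK)).
  case/orP; first (move=> /eqP [-> ->]; move=> hn; exfalso; exact: (Bool.diff_false_true hn)).
  case/orP; first (move=> /eqP [-> ->]; move=> hn; exfalso; exact: (Bool.diff_false_true hn)).
  case/orP; first (move=> /eqP [-> ->]; move=> _ HK; exfalso; exact: (Bool.diff_false_true HK)).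
  case/orP; first (move=> /eqP [-> ->]; move=> hn; exfalso; exact: (Bool.diff_false_true hn)).
  case/orP; first (move=> /eqP [-> ->]; move=> _ _ ->; rewrite /Aq /Bq; right; field; try done).
  case/orP; first (move=> /eqP [-> ->]; move=> hn; exfalso; exact: (Bool.diff_false_true hn)).
  case/orP; first (move=> /eqP [-> ->]; move=> _ _ ->; rewrite /Aq /Bq; left; field; try done).
  case/orP; first (move=> /eqP [-> ->]; move=> hn; exfalso; exact: (Bool.diff_false_true hn)).
  (move=> /eqP [-> ->]; move=> _ HK; exfalso; exact: (Bool.diff_false_true HK)).
Qed.

Lemma bwd_gen (c x y z : rat) : fc c x = y -> fc c y = z -> fc c z = x -> y <> x -> z <> x ->
  min_period3 c x.
Proof.
  move=> E1 E2 E3 H1 H2. split; first by rewrite /= E1 E2 E3.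
  move=> k hk; case: k hk => [|[|[|k]]] //= _.
  - by rewrite E1.
  - by rewrite E1 E2.
Qed.

Lemma partA_bwd : has_3cycle_with_num (- 421 / 144) [:: 11; -11; 17; -17; 25; -25].
Proof.
  exists (-11/12). split.
  - apply: (@bwd_gen _ _ (-25/12) (17/12)); rewrite /fc; try (field; try done); lra.
  - left. by [].
Qed.

Lemma partB_bwd1 : has_3cycle_with_num (- 301 / 144) [:: 19; -19].
Proof.
  exists (19/12). split.
  - apply: (@bwd_gen _ _ (5/12) (-23/12)); rewrite /fc; try (field; try done); lra.
  - left. by [].
Qed.

Lemma partB_bwd2 : has_3cycle_with_num (- (337 * 673) / 360 ^+ 2) [:: 19; -19].
Proof.
  exists (-19/360). split.
  - apply: (@bwd_gen _ _ (-629/360) (469/360)); rewrite /fc; try (field; try done); lra.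
  - left. by [].
Qed.

Lemma partC_bwd1 : has_3cycle_with_num (- 301 / 144) [:: 23; -23].
Proof.
  exists (-23/12). split.
  - apply: (@bwd_gen _ _ (19/12) (5/12)); rewrite /fc; try (field; try done); lra.
  - left. by [].
Qed.

Lemma partC_bwd2 : has_3cycle_with_num (- 43 ^+ 2 / 24 ^+ 2) [:: 23; -23].
Proof.
  exists (23/24). split.
  - apply: (@bwd_gen _ _ (-55/24) (49/24)); rewrite /fc; try (field; try done); lra.
  - left. by [].
Qed.

Theorem theorem8 (c : rat) :
  (has_3cycle_with_num c [:: 11; -11; 17; -17; 25; -25] <->
     c = - 421 / 144)
  /\ (has_3cycle_with_num c [:: 19; -19] <->
     c = - 301 / 144 \/ c = - (337 * 673) / 360 ^+ 2)
  /\ (has_3cycle_with_num c [:: 23; -23] <->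
     c = - 301 / 144 \/ c = - 43 ^+ 2 / 24 ^+ 2).
Proof.
  split; [|split]; split.
  - exact: partA_fwd.
  - move=> ->; exact: partA_bwd.
  - exact: partB_fwd.
  - by case=> ->; [exact: partB_bwd1 | exact: partB_bwd2].
  - exact: partC_fwd.
  - by case=> ->; [exact: partC_bwd1 | exact: partC_bwd2].
Qed.
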